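(* Let $\alpha$ be a proper fraction ($0<\alpha<1$) and let $u=(u_k)$ be a sequence with $u_k\neq 0$ for all $k\in\mathbb{N}$. Then the sequence space $c_0(\Gamma,\Delta^{(\alpha)},u)=\{x\in\omega:(\sum_{j=0}^k u_j\Delta^{(\alpha)}x_j)_{k}\in c_0\}$ is linearly isomorphic to $c_0$, and the sequence space $c(\Gamma,\Delta^{(\alpha)},u)=\{x\in\omega:(\sum_{j=0}^k u_j\Delta^{(\alpha)}x_j)_{k}\in c\}$ is linearly isomorphic to $c$.
   Context: $\omega$ denotes the space of all real or complex sequences, $c$ the space of convergent sequences and $c_0$ the space of null sequences; $\mathbb{N}=\{0,1,2,\dots\}$. For $x=(x_k)\in\omega$ the fractional difference operator is $\Delta^{(\alpha)}x_k=\sum_{i=0}^{\infty}(-1)^i\frac{\Gamma(\alpha+1)}{i!\,\Gamma(\alpha+1-i)}x_{k-i}$, where $\Gamma$ is the gamma function and $x_j=0$ for $j<0$. *)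

(* Defs.v *)
From Stdlib Require Import Reals Lra ZArith List.
From Coquelicot Require Import Coquelicot.
Open Scope R_scope.

Definition Gamma_pos (x : R) : R :=
  RInt_gen (fun t => Rpower t (x - 1) * exp (- t))
           (at_right 0) (Rbar_locally p_infty).

(* Gamma on all reals via the functional equation Gamma(x+1) = x Gamma(x):
   Gamma x = Gamma_pos (x + n) / (x (x+1) ... (x+n-1)), n = 1 - floor x,
   so that x + n lies in (0,1]+... i.e. x + n > 0.  (Values at non-positive
   integers are junk; they never occur below since 0 < alpha < 1.) *)
Definition Gamma_n (x : R) : nat := Z.to_nat (1 - Int_part x).

Definition Gamma (x : R) : R :=
  Gamma_pos (x + INR (Gamma_n x)) /
  fold_right Rmult 1 (map (fun k => x + INR k) (seq 0 (Gamma_n x))).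

(* Fractional difference operator, with x_j = 0 for j < 0. *)
Definition frac_diff (a : R) (x : nat -> R) (k : nat) : R :=
  sum_f_R0 (fun i => (-1) ^ i * Gamma (a + 1)
                     / (INR (fact i) * Gamma (a + 1 - INR i)) * x (k - i)%nat) k.

Definition Gamma_transform (a : R) (u x : nat -> R) (k : nat) : R :=
  sum_f_R0 (fun j => u j * frac_diff a x j) k.

Definition c0_seq (y : nat -> R) : Prop := is_lim_seq y 0.
Definition c_seq (y : nat -> R) : Prop := exists l : R, is_lim_seq y l.

Definition c0_Gamma (a : R) (u : nat -> R) (x : nat -> R) : Prop :=
  c0_seq (Gamma_transform a u x).
Definition c_Gamma (a : R) (u : nat -> R) (x : nat -> R) : Prop :=
  c_seq (Gamma_transform a u x).

Definition lin_isomorphic (X Y : (nat -> R) -> Prop) : Prop :=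
  exists f : (nat -> R) -> (nat -> R),
    (forall x y s t, X x -> X y ->
       f (fun k => s * x k + t * y k) = (fun k => s * f x k + t * f y k)) /\
    (forall x, X x -> Y (f x)) /\
    (forall x y, X x -> X y -> f x = f y -> x = y) /\
    (forall y, Y y -> exists x, X x /\ f x = y).

(* Main.v *)
Require Import Defs.
From Stdlib Require Import Reals Lra ZArith List Lia FunctionalExtensionality Factorial.
From Coquelicot Require Import Coquelicot.
Open Scope R_scope.

Definition Dc (c : nat -> R) (x : nat -> R) (k : nat) : R :=
  sum_f_R0 (fun i => c i * x (k - i)%nat) k.
Definition Tc (u c : nat -> R) (x : nat -> R) (k : nat) : R :=
  sum_f_R0 (fun j => u j * Dc c x j) k.

Lemma sum_lin (f g : nat -> R) s t n :
  sum_f_R0 (fun i => s * f i + t * g i) n = s * sum_f_R0 f n + t * sum_f_R0 g n.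
Proof. induction n; simpl; [ring | rewrite IHn; ring]. Qed.

Lemma Dc_0 c x : c 0%nat = 1 -> Dc c x 0 = x 0%nat.
Proof. intros H; unfold Dc; simpl; rewrite H; ring. Qed.

Lemma Dc_S c x k : c 0%nat = 1 ->
  Dc c x (S k) = x (S k) + sum_f_R0 (fun i => c (S i) * x (k - i)%nat) k.
Proof.
  intros H; unfold Dc. rewrite decomp_sum by lia. simpl pred.
  rewrite H, Nat.sub_0_r. f_equal. ring.
Qed.

Lemma Tc_lin u c x y s t :
  Tc u c (fun k => s * x k + t * y k) = (fun k => s * Tc u c x k + t * Tc u c y k).
Proof.
  apply functional_extensionality; intro k; unfold Tc.
  rewrite <- sum_lin. apply sum_eq; intros j _.
  unfold Dc. rewrite (sum_eq _ (fun i => s * (c i * x (j - i)%nat) + t * (c i * y (j - i)%nat))).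
  2:{ intros; ring. }
  rewrite sum_lin; ring.
Qed.

Lemma Tc_inj u c x y : c 0%nat = 1 -> (forall k, u k <> 0) ->
  Tc u c x = Tc u c y -> x = y.
Proof.
  intros Hc Hu H.
  assert (HD : forall k, Dc c x k = Dc c y k).
  { intros [|k].
    - assert (E := f_equal (fun f => f 0%nat) H). unfold Tc in E; simpl in E.
      apply (Rmult_eq_reg_l (u 0%nat)); auto.
    - assert (E1 := f_equal (fun f => f (S k)) H). assert (E2 := f_equal (fun f => f k) H).
      unfold Tc in E1, E2; simpl in E1, E2. apply (Rmult_eq_reg_l (u (S k))); auto. lra. }
  assert (Hs : forall n j, (j <= n)%nat -> x j = y j).
  { induction n; intros j Hj.
    - replace j with 0%nat by lia. rewrite <- (Dc_0 c x), <- (Dc_0 c y); auto.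
    - destruct (Nat.le_gt_cases j n) as [Hjn|Hjn]; [auto|].
      replace j with (S n) by lia. specialize (HD (S n)).
      rewrite !Dc_S in HD by auto.
      rewrite (sum_eq (fun i => c (S i) * y (n - i)%nat) (fun i => c (S i) * x (n - i)%nat)) in HD.
      + lra.
      + intros i Hi. rewrite (IHn (n - i)%nat) by lia. reflexivity. }
  apply functional_extensionality; intro j. apply (Hs j); lia.
Qed.

Section Surj.
Variables (u c y : nat -> R).
Definition zz (j : nat) : R :=
  match j with 0%nat => y 0%nat / u 0%nat | S j' => (y (S j') - y j') / u (S j') end.
Fixpoint GG (n : nat) : nat -> R :=
  match n with
  | 0%nat => fun _ => zz 0
  | S m => fun j => if Nat.leb j m then GG m j
                    else zz (S m) - sum_f_R0 (fun i => c (S i) * GG m (m - i)%nat) m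
  end.
Lemma GG_stable n j : (j <= n)%nat -> GG n j = GG j j.
Proof.
  induction n; intros Hj.
  - replace j with 0%nat by lia; reflexivity.
  - destruct (Nat.le_gt_cases j n) as [Hjn|Hjn].
    + simpl. rewrite (proj2 (Nat.leb_le j n) Hjn). auto.
    + replace j with (S n) by lia. reflexivity.
Qed.
End Surj.

Lemma Tc_surj u c y : c 0%nat = 1 -> (forall k, u k <> 0) ->
  exists x, Tc u c x = y.
Proof.
  intros Hc Hu. exists (fun j => GG u c y j j).
  assert (HD : forall k, Dc c (fun j => GG u c y j j) k = zz u y k).
  { intros [|k].
    - rewrite Dc_0 by auto. reflexivity.
    - rewrite Dc_S by auto. cbn [GG]. replace (S k <=? k)%nat with false by (symmetry; apply Nat.leb_gt; lia).
      rewrite (sum_eq (fun i => c (S i) * GG u c y (k - i)%nat (k - i)%nat)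
                      (fun i => c (S i) * GG u c y k (k - i)%nat)).
      + ring.
      + intros i Hi. rewrite (GG_stable u c y k (k - i)%nat) by lia. reflexivity. }
  apply functional_extensionality; intro k. unfold Tc.
  rewrite (sum_eq _ (fun j => u j * zz u y j)) by (intros; rewrite HD; reflexivity).
  induction k.
  - simpl. field. auto.
  - simpl. rewrite IHk. field. auto.
Qed.

Lemma Tc_iso u c (P : (nat -> R) -> Prop) : c 0%nat = 1 -> (forall k, u k <> 0) ->
  lin_isomorphic (fun x => P (Tc u c x)) P.
Proof.
  intros Hc Hu. exists (Tc u c). split; [|split; [|split]].
  - intros; apply Tc_lin.
  - auto.
  - intros x y _ _; apply Tc_inj; auto.
  - intros y Hy. destruct (Tc_surj u c y Hc Hu) as [x Hx]. exists x. rewrite Hx. auto.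
Qed.

Lemma exp_mono x y : x <= y -> exp x <= exp y.
Proof. intros [H|H]; [left; apply exp_increasing; auto | subst; right; auto]. Qed.

Lemma aux_eq (y : R) : -4 * (- (1 * / 2) * y) = 2 * y.
Proof. field. Qed.

Section F.
Variable b : R.
Hypothesis Hb : 0 < b < 1.
Definition ff (t : R) := exp (b * ln t) * exp (- t).

Lemma ff_cont z : 0 < z -> continuous ff z.
Proof.
  intros Hz. apply (@ex_derive_continuous R_AbsRing R_NormedModule). unfold ff. auto_derive. lra.
Qed.

Lemma ff_ex p q : 0 < p -> 0 < q -> ex_RInt ff p q.
Proof.
  intros Hp Hq. apply (@ex_RInt_continuous R_CompleteNormedModule). intros z Hz. apply ff_cont.
  destruct Hz as [Hz _]. unfold Rmin in Hz; destruct Rle_dec; lra.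
Qed.

Lemma ff_pos t : 0 < ff t.
Proof. unfold ff. apply Rmult_lt_0_compat; apply exp_pos. Qed.

Lemma ff_le1 t : 0 < t <= 1 -> ff t <= 1.
Proof.
  intros Ht. unfold ff. rewrite <- (Rmult_1_l 1).
  assert (ln t <= 0) by (rewrite <- ln_1; apply ln_le; lra).
  apply Rmult_le_compat; try (left; apply exp_pos).
  - rewrite <- exp_0. apply exp_mono. nra.
  - rewrite <- exp_0. apply exp_mono. lra.
Qed.

Lemma ff_tail t : 1 <= t -> ff t <= 2 * exp (- (t / 2)).
Proof.
  intros Ht. unfold ff.
  assert (H0 : 0 <= ln t) by (rewrite <- ln_1; apply ln_le; lra).
  assert (H1 : exp (b * ln t) <= t).
  { rewrite <- (exp_ln t) at 2 by lra. apply exp_mono. nra. }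
  assert (H2 : t <= 2 * exp (t / 2)).
  { assert (H := exp_ineq1 (t/2)). lra. }
  assert (H3 : exp (-t) = exp (- (t/2)) * exp (- (t/2))).
  { replace (-t) with (-(t/2) + -(t/2)) by field. rewrite !exp_plus; reflexivity. }
  rewrite H3.
  assert (0 < exp (- (t/2))) by apply exp_pos.
  assert (0 < exp (t/2)) by apply exp_pos.
  assert (exp (t/2) * exp (- (t/2)) = 1) by (rewrite <- exp_plus, <- exp_0; f_equal; ring).
  assert (0 < exp (b * ln t)) by apply exp_pos.
  set (e := exp (- (t/2))) in *. set (E := exp (b * ln t)) in *.
  assert (E*(e*e) <= t*(e*e)) by (apply Rmult_le_compat_r; nra).
  assert (t*(e*e) <= 2*exp(t/2)*(e*e)) by (apply Rmult_le_compat_r; nra).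
  nra.
Qed.

Lemma int_small p q : 0 < p <= q -> q <= 1 -> Rabs (RInt ff p q) <= q - p.
Proof.
  intros Hp Hq. rewrite <- (Rmult_1_r (q - p)).
  apply abs_RInt_le_const; try lra. apply ff_ex; lra.
  intros t Ht. rewrite Rabs_pos_eq by (left; apply ff_pos). apply ff_le1; lra.
Qed.

Lemma int_tail p q : 1 <= p <= q -> Rabs (RInt ff p q) <= 8 / p.
Proof.
  intros Hp.
  set (G := fun t => -4 * exp (- (t / 2))).
  assert (HG : is_RInt (fun t => 2 * exp (- (t / 2))) p q (minus (G q) (G p))).
  { apply (is_RInt_derive G). 
    - intros x _. unfold G. auto_derive; auto. apply aux_eq.
    - intros x _. apply (@ex_derive_continuous R_AbsRing R_NormedModule). auto_derive. auto. }
  apply (@is_RInt_unique R_CompleteNormedModule) in HG.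
  assert (Hle : RInt ff p q <= RInt (fun t => 2 * exp (- (t / 2))) p q).
  { apply RInt_le; try lra. apply ff_ex; lra. eexists; apply (is_RInt_derive G).
    - intros x _. unfold G. auto_derive; auto. apply aux_eq.
    - intros x _. apply (@ex_derive_continuous R_AbsRing R_NormedModule). auto_derive. auto.
    - intros x Hx. apply ff_tail. lra. }
  assert (Hge : 0 <= RInt ff p q).
  { apply RInt_ge_0; try lra. apply ff_ex; lra. intros; left; apply ff_pos. }
  rewrite HG in Hle. unfold G, minus, plus, opp in Hle; simpl in Hle.
  assert (0 < exp (- (q / 2))) by apply exp_pos.
  assert (Hexp : exp (- (p / 2)) * (1 + p / 2) <= 1).
  { assert (Hq1 := exp_ineq1 (p/2)).
    assert (exp (p/2) * exp (- (p/2)) = 1) by (rewrite <- exp_plus, <- exp_0; f_equal; ring).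
    assert (0 < exp (- (p / 2))) by apply exp_pos. nra. }
  assert (exp (- (p / 2)) <= 2 / p).
  { apply (Rmult_le_reg_r (1 + p/2)); [lra|]. apply (Rle_trans _ 1); auto.
    unfold Rdiv. rewrite Rmult_assoc. apply (Rmult_le_reg_l p); [lra|].
    replace (p * (2 * (/ p * (1 + p * / 2)))) with (2 + p) by (field; lra). lra. }
  rewrite Rabs_pos_eq by auto. lra.
Qed.
End F.

Section G.
Variable b : R.
Hypothesis Hb : 0 < b < 1.

Lemma small_abs x1 x2 : 0 < x1 <= 1 -> 0 < x2 <= 1 ->
  Rabs (RInt (ff b) x2 x1) <= Rabs (x1 - x2).
Proof.
  intros H1 H2. destruct (Rle_lt_dec x2 x1).
  - rewrite (Rabs_pos_eq (x1 - x2)) by lra. apply int_small; auto; lra.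
  - rewrite <- (@opp_RInt_swap R_CompleteNormedModule) by (apply ff_ex; lra). change (opp ?x) with (- x).
    rewrite Rabs_Ropp, (Rabs_left (x1 - x2)) by lra.
    apply (Rle_trans _ (x2 - x1)); [apply int_small; auto; lra | lra].
Qed.

Lemma tail_abs y1 y2 : 1 <= y1 -> 1 <= y2 ->
  Rabs (RInt (ff b) y1 y2) <= 8 / y1 + 8 / y2.
Proof.
  intros H1 H2. assert (0 < 8 / y1) by (apply Rdiv_lt_0_compat; lra).
  assert (0 < 8 / y2) by (apply Rdiv_lt_0_compat; lra).
  destruct (Rle_lt_dec y1 y2).
  - apply (Rle_trans _ (8 / y1)); [apply int_tail; auto; lra | lra].
  - rewrite <- (@opp_RInt_swap R_CompleteNormedModule) by (apply ff_ex; lra). change (opp ?x) with (- x).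
    rewrite Rabs_Ropp.
    apply (Rle_trans _ (8 / y2)); [apply int_tail; auto; lra | lra].
Qed.

Lemma chasles3 x1 y1 x2 y2 : 0 < x1 -> 0 < y1 -> 0 < x2 -> 0 < y2 ->
  RInt (ff b) x2 y2 = RInt (ff b) x2 x1 + RInt (ff b) x1 y1 + RInt (ff b) y1 y2.
Proof.
  intros. rewrite <- (@RInt_Chasles R_CompleteNormedModule (ff b) x2 x1 y2) by (apply ff_ex; lra).
  rewrite <- (@RInt_Chasles R_CompleteNormedModule (ff b) x1 y1 y2) by (apply ff_ex; lra).
  simpl. unfold plus; simpl. ring.
Qed.

Lemma at_right_small (d : R) : 0 < d -> at_right 0 (fun x => 0 < x < d).
Proof.
  intros Hd. unfold at_right, within. exists (mkposreal d Hd). intros y Hy Hy0.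
  unfold ball in Hy; simpl in Hy. unfold AbsRing_ball, abs, minus, plus, opp in Hy; simpl in Hy.
  rewrite Ropp_0, Rplus_0_r in Hy. apply Rabs_def2 in Hy. lra.
Qed.

Definition FF := filter_prod (at_right 0) (Rbar_locally p_infty).

Lemma FF_box d M : 0 < d -> FF (fun ab => 0 < fst ab < d /\ M < snd ab).
Proof.
  intros Hd. exists (fun x => 0 < x < d) (fun y => M < y).
  - apply at_right_small; auto.
  - exists M; auto.
  - intros x y Hx Hy; simpl; auto.
Qed.

Instance FF_proper : ProperFilter FF.
Proof. unfold FF. apply filter_prod_proper; try apply at_right_proper_filter; try apply Rbar_locally_filter. Qed.

Lemma gen_exists : exists l, is_RInt_gen (ff b) (at_right 0) (Rbar_locally p_infty) l /\ 0 < l.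
Proof.
  set (g := fun ab : R * R => RInt (ff b) (fst ab) (snd ab)).
  assert (Hc : exists l : R, filterlim g FF (locally l)).
  { apply (proj1 (@filterlim_locally_cauchy (R * R) R_CompleteSpace FF FF_proper g)).
    intros eps. set (d := Rmin (eps / 2) 1). set (M := Rmax 1 (32 / eps)).
    assert (Hd : 0 < d) by (unfold d, Rmin; destruct Rle_dec; destruct eps; simpl; lra).
    exists (fun ab => 0 < fst ab < d /\ M < snd ab). split; [apply FF_box; auto|].
    intros [x1 y1] [x2 y2] [Hx1 Hy1] [Hx2 Hy2]; simpl in *.
    unfold ball; simpl. unfold AbsRing_ball, abs, minus, plus, opp; simpl. unfold g; simpl.
    destruct eps as [e He]; simpl in *.
    assert (d <= e / 2) by apply Rmin_l. assert (d <= 1) by apply Rmin_r.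
    assert (1 <= M) by apply Rmax_l. assert (HM : 32 / e <= M) by apply Rmax_r.
    rewrite (chasles3 x1 y1 x2 y2) by lra.
    replace (RInt (ff b) x2 x1 + RInt (ff b) x1 y1 + RInt (ff b) y1 y2 + - RInt (ff b) x1 y1)
      with (RInt (ff b) x2 x1 + RInt (ff b) y1 y2) by ring.
    eapply Rle_lt_trans; [apply Rabs_triang|].
    assert (A1 := small_abs x1 x2 ltac:(lra) ltac:(lra)).
    assert (A2 := tail_abs y1 y2 ltac:(lra) ltac:(lra)).
    assert (Rabs (x1 - x2) < e / 2) by (apply Rabs_def1; lra).
    assert (8 / y1 < e / 4).
    { apply (Rmult_lt_reg_r y1); [lra|]. unfold Rdiv. rewrite Rmult_assoc, Rinv_l by lra.
      apply (Rmult_le_compat_l e) in HM; [|lra].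
      replace (e * (32 / e)) with 32 in HM by (field; lra). nra. }
    assert (8 / y2 < e / 4).
    { apply (Rmult_lt_reg_r y2); [lra|]. unfold Rdiv. rewrite Rmult_assoc, Rinv_l by lra.
      apply (Rmult_le_compat_l e) in HM; [|lra].
      replace (e * (32 / e)) with 32 in HM by (field; lra). nra. }
    lra. }
  destruct Hc as [l Hl].
  assert (Hgen : is_RInt_gen (ff b) (at_right 0) (Rbar_locally p_infty) l).
  { unfold is_RInt_gen. apply (filterlimi_lim_ext_loc g); [|exact Hl].
    eapply filter_imp; [|apply (FF_box 1 1); lra].
    intros [x y] [Hx Hy]; simpl in *. unfold g; simpl.
    apply (@RInt_correct R_CompleteNormedModule). apply ff_ex; lra. }
  exists l; split; auto.
  set (c := RInt (ff b) 1 2).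
  assert (Hcpos : 0 < c).
  { apply RInt_gt_0; [lra | intros; apply ff_pos | intros; apply ff_cont; lra]. }
  assert (H1 : FF (fun ab => c <= g ab)).
  { eapply filter_imp; [|apply (FF_box 1 2); lra].
    intros [x y] [Hx Hy]; simpl in *. unfold g; simpl.
    rewrite (chasles3 1 2 x y) by lra. fold c.
    assert (0 <= RInt (ff b) x 1).
    { apply RInt_ge_0; [lra | apply ff_ex; lra | intros; left; apply ff_pos]. }
    assert (0 <= RInt (ff b) 2 y).
    { apply RInt_ge_0; [lra | apply ff_ex; lra | intros; left; apply ff_pos]. }
    lra. }
  assert (Hc2 : 0 < c / 2) by lra.
  assert (H2 : FF (fun ab => ball l (mkposreal _ Hc2) (g ab))).
  { apply Hl. apply locally_ball. }
  destruct (filter_ex _ (filter_and _ _ H1 H2)) as [ab [Hab1 Hab2]].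
  unfold ball in Hab2; simpl in Hab2. unfold AbsRing_ball, abs, minus, plus, opp in Hab2; simpl in Hab2.
  apply Rabs_def2 in Hab2. lra.
Qed.
End G.

Lemma Gamma_a1 (a : R) : 0 < a < 1 -> Gamma (a + 1) <> 0.
Proof.
  intros Ha. unfold Gamma, Gamma_n, Int_part.
  rewrite <- (tech_up (a + 1) 2) by (rewrite ?plus_IZR; simpl; lra).
  simpl. rewrite Rplus_0_r. unfold Rdiv. rewrite Rinv_1, Rmult_1_r.
  unfold Gamma_pos.
  destruct (gen_exists (a + 1 - 1) ltac:(lra)) as [l [Hl Hpos]].
  change (RInt_gen (ff (a + 1 - 1)) (at_right 0) (Rbar_locally p_infty) <> 0).
  rewrite (@is_RInt_gen_unique R_CompleteNormedModule _ _ _ _ _ _ Hl). lra.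
Qed.

Definition cA (a : R) (i : nat) : R :=
  (-1) ^ i * Gamma (a + 1) / (INR (fact i) * Gamma (a + 1 - INR i)).

Lemma cA0 a : 0 < a < 1 -> cA a 0 = 1.
Proof.
  intros Ha. unfold cA. simpl. rewrite Rminus_0_r. field. apply Gamma_a1; auto.
Qed.

Theorem theorem2 (a : R) (u : nat -> R) :
  0 < a < 1 -> (forall k : nat, u k <> 0) ->
  lin_isomorphic (c0_Gamma a u) c0_seq /\ lin_isomorphic (c_Gamma a u) c_seq.
Proof.
  intros Ha Hu. split.
  - exact (Tc_iso u (cA a) c0_seq (cA0 a Ha) Hu).
  - exact (Tc_iso u (cA a) c_seq (cA0 a Ha) Hu).
Qed.
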